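(* Let $\Phi = \{\xi = (\tau_L,\delta_L,\tau_R,\delta_R) \in \mathbb{R}^4 : \tau_L > |\delta_L + 1|,\ \tau_R < -|\delta_R+1|\}$ and $\alpha(\xi) = \tau_L\tau_R + (\delta_L - 1)(\delta_R - 1)$. If $\xi \in \Phi$ and $\delta_L + \delta_R \ge 0$, then $\alpha(\xi) < 0$. *)

(* Defs.v *)
From Stdlib Require Import Reals Lra.
Open Scope R_scope.

Definition xi4 : Type := (R * R * R * R)%type.

Definition Phi (xi : xi4) : Prop :=
  let '(tauL, deltaL, tauR, deltaR) := xi in
  tauL > Rabs (deltaL + 1) /\ tauR < - Rabs (deltaR + 1).

Definition alpha (xi : xi4) : R :=
  let '(tauL, deltaL, tauR, deltaR) := xi in
  tauL * tauR + (deltaL - 1) * (deltaR - 1).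

(* Main.v *)
Require Import Defs.
From Stdlib Require Import Reals Lra Psatz.
Open Scope R_scope.

Theorem proposition4p2 (tauL deltaL tauR deltaR : R) :
  Phi (tauL, deltaL, tauR, deltaR) ->
  deltaL + deltaR >= 0 ->
  alpha (tauL, deltaL, tauR, deltaR) < 0.
Proof.
  unfold Phi, alpha. intros [H1 H2] H3.
  set (a := Rabs (deltaL + 1)) in *.
  set (b := Rabs (deltaR + 1)) in *.
  assert (Ha : 0 <= a) by apply Rabs_pos.
  assert (Hb : 0 <= b) by apply Rabs_pos.
  assert (Hab : (deltaL + 1) * (deltaR + 1) <= a * b).
  { unfold a, b. rewrite <- Rabs_mult. apply RRle_abs. }
  assert (tauL * (- tauR) > a * b).
  { assert (tauL * (-tauR) > tauL * b) by nra. nra. }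
  nra.
Qed.
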